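(* Let $X$ be a biquandle in which $a\uparrow(b\downarrow c)=a\uparrow b$, $a\Uparrow(b\downarrow c)=a\Uparrow b$, $a\downarrow(b\uparrow c)=a\downarrow b$ and $a\Downarrow(b\uparrow c)=a\Downarrow b$ hold for all $a,b,c\in X$. Then: (1) for all $a,b,c\in X$: $a\uparrow(b\downarrow c)=a\uparrow(b\Downarrow c)=a\uparrow b$, $a\Uparrow(b\downarrow c)=a\Uparrow(b\Downarrow c)=a\Uparrow b$, $a\downarrow(b\uparrow c)=a\downarrow(b\Uparrow c)=a\downarrow b$, $a\Downarrow(b\uparrow c)=a\Downarrow(b\Uparrow c)=a\Downarrow b$; (2) for all $a,b\in X$: $(a\uparrow b)\Uparrow b=(a\Uparrow b)\uparrow b=(a\downarrow b)\Downarrow b=(a\Downarrow b)\downarrow b=a$; (3) every up-type operation commutes with every down-type operation: for all $a,b,c\in X$, $(a\uparrow b)\downarrow c=(a\downarrow c)\uparrow b$, $(a\Uparrow b)\downarrow c=(a\downarrow c)\Uparrow b$, $(a\uparrow b)\Downarrow c=(a\Downarrow c)\uparrow b$, $(a\Uparrow b)\Downarrow c=(a\Downarrow c)\Uparrow b$; (4) for all $a,b,c\in X$: $a\uparrow(b\uparrow c)=((a\Uparrow c)\uparrow b)\uparrow c$ and $a\downarrow(b\downarrow c)=((a\Downarrow c)\downarrow b)\downarrow c$.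
   Context: A biquandle is a set $B$ with two binary operations $\uparrow$ (up) and $\downarrow$ (down), $B$ closed under them, such that: (1) for every $a\in B$ the maps $f_a(x)=x\uparrow a$, $g_a(x)=x\downarrow a$ are bijections $B\to B$, and $S\colon B\times B\to B\times B$, $S(x,y)=(y\downarrow x,\ x\uparrow y)$, is a bijection; (2) for every $a\in B$, $f_a^{-1}(a)=a\downarrow f_a^{-1}(a)$ and $g_a^{-1}(a)=a\uparrow g_a^{-1}(a)$; (3) for all $a,b,c\in B$: $(a\uparrow b)\uparrow c=(a\uparrow(c\downarrow b))\uparrow(b\uparrow c)$; $(a\downarrow b)\uparrow(c\downarrow(b\uparrow a))=(a\uparrow c)\downarrow(b\uparrow(c\downarrow a))$; $(a\downarrow b)\downarrow c=(a\downarrow(c\uparrow b))\downarrow(b\downarrow c)$. The up-bar and down-bar operations $\Uparrow,\Downarrow$ are defined by $S^{-1}(a,b)=(b\Uparrow a,\ a\Downarrow b)$. *)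

(* Defs.v *)
From mathcomp Require Import ssreflect ssrfun ssrbool.

Definition bqS {B : Type} (up down : B -> B -> B) (p : B * B) : B * B :=
  (down p.2 p.1, up p.1 p.2).

Definition is_biquandle {B : Type} (up down : B -> B -> B) : Prop :=
  (forall a : B, bijective (fun x => up x a)) /\
  (forall a : B, bijective (fun x => down x a)) /\
  bijective (bqS up down) /\
  (* (2) f_a^{-1}(a) = a ↓ f_a^{-1}(a) and g_a^{-1}(a) = a ↑ g_a^{-1}(a);
     since f_a, g_a are bijections, f_a^{-1}(a) is the unique x with x ↑ a = a *)
  (forall a x : B, up x a = a -> x = down a x) /\
  (forall a x : B, down x a = a -> x = up a x) /\
  (forall a b c : B, up (up a b) c = up (up a (down c b)) (up b c)) /\
  (forall a b c : B,
      up (down a b) (down c (up b a)) = down (up a c) (up b (down c a))) /\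
  (forall a b c : B, down (down a b) c = down (down a (up c b)) (down b c)).

Definition bqSinv {B : Type} (upbar downbar : B -> B -> B) (p : B * B) : B * B :=
  (upbar p.2 p.1, downbar p.1 p.2).

Definition are_bar_ops {B : Type} (up down upbar downbar : B -> B -> B) : Prop :=
  cancel (bqS up down) (bqSinv upbar downbar) /\
  cancel (bqSinv upbar downbar) (bqS up down).

(* Main.v *)
Require Import Defs.
From mathcomp Require Import ssreflect ssrfun ssrbool.

Theorem mainTheorem8 (B : Type) (up down upbar downbar : B -> B -> B) :
  is_biquandle up down ->
  are_bar_ops up down upbar downbar ->
  (forall a b c : B, up a (down b c) = up a b) ->
  (forall a b c : B, upbar a (down b c) = upbar a b) ->
  (forall a b c : B, down a (up b c) = down a b) ->
  (forall a b c : B, downbar a (up b c) = downbar a b) ->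
  (* (1) *)
  (forall a b c : B,
      up a (down b c) = up a (downbar b c) /\ up a (downbar b c) = up a b /\
      upbar a (down b c) = upbar a (downbar b c) /\ upbar a (downbar b c) = upbar a b /\
      down a (up b c) = down a (upbar b c) /\ down a (upbar b c) = down a b /\
      downbar a (up b c) = downbar a (upbar b c) /\ downbar a (upbar b c) = downbar a b) /\
  (* (2) *)
  (forall a b : B,
      upbar (up a b) b = up (upbar a b) b /\
      up (upbar a b) b = downbar (down a b) b /\
      downbar (down a b) b = down (downbar a b) b /\
      down (downbar a b) b = a) /\
  (* (3) *)
  (forall a b c : B,
      down (up a b) c = up (down a c) b /\
      down (upbar a b) c = upbar (down a c) b /\
      downbar (up a b) c = up (downbar a c) b /\
      downbar (upbar a b) c = upbar (downbar a c) b) /\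
  (* (4) *)
  (forall a b c : B,
      up a (up b c) = up (up (upbar a c) b) c /\
      down a (down b c) = down (down (downbar a c) b) c).
Proof.
move=> [bu [bd [_ [_ [_ [Y1 [Y2 Y3]]]]]]] [C1 C2] H1 H2 H3 H4.
have E1 : forall x y, upbar (up x y) (down y x) = x.
  by move=> x y; have := C1 (x, y); rewrite /bqS /bqSinv /=; case.
have E2 : forall x y, downbar (down y x) (up x y) = y.
  by move=> x y; have := C1 (x, y); rewrite /bqS /bqSinv /=; case.
have E3 : forall a b, down (downbar a b) (upbar b a) = a.
  by move=> a b; have := C2 (a, b); rewrite /bqS /bqSinv /=; case.
have E4 : forall a b, up (upbar b a) (downbar a b) = b.
  by move=> a b; have := C2 (a, b); rewrite /bqS /bqSinv /=; case.
have U1 : forall a b, upbar (up a b) b = a.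
  by move=> a b; rewrite -(H2 _ _ a) E1.
have D1 : forall a b, downbar (down a b) b = a.
  by move=> a b; rewrite -(H4 _ _ a) E2.
have Sd : forall b c, exists y, b = down y c.
  move=> b c; case: (bd c) => g _ K; exists (g b); by rewrite K.
have Su : forall b c, exists y, b = up y c.
  move=> b c; case: (bu c) => g _ K; exists (g b); by rewrite K.
have P1 : forall a b c, up a (downbar b c) = up a b.
  move=> a b c; case: (Sd b c) => y ->; by rewrite D1 H1.
have P2 : forall a b c, upbar a (downbar b c) = upbar a b.
  move=> a b c; case: (Sd b c) => y ->; by rewrite D1 H2.
have P3 : forall a b c, down a (upbar b c) = down a b.
  move=> a b c; case: (Su b c) => y ->; by rewrite U1 H3.
have P4 : forall a b c, downbar a (upbar b c) = downbar a b.
  move=> a b c; case: (Su b c) => y ->; by rewrite U1 H4.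
have U2 : forall a b, up (upbar a b) b = a.
  by move=> a b; rewrite -{2}(E4 b a) P1.
have D2 : forall a b, down (downbar a b) b = a.
  by move=> a b; rewrite -{2}(E3 a b) P3.
have T1 : forall a b c, down (up a b) c = up (down a c) b.
  by move=> a b c; have := Y2 a c b; rewrite H1 H3.
have T2 : forall a b c, down (upbar a b) c = upbar (down a c) b.
  move=> a b c; rewrite -{2}(U2 a b) T1; by rewrite U1.
have T3 : forall a b c, downbar (up a b) c = up (downbar a c) b.
  move=> a b c; rewrite -{1}(D2 a c) -T1; by rewrite D1.
have T4 : forall a b c, downbar (upbar a b) c = upbar (downbar a c) b.
  move=> a b c; rewrite -{1}(D2 a c) -T2; by rewrite D1.
split.
  move=> a b c; rewrite H1 P1 H2 P2 H3 P3 H4 P4; by do !split.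
split.
  move=> a b; rewrite U1 U2 D1 D2; by do !split.
split.
  move=> a b c; by rewrite T1 T2 T3 T4.
move=> a b c; split.
  by rewrite Y1 H1 U2.
by rewrite Y3 H3 D2.
Qed.
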